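(* For every $n \geq 2$, every $p=(p_1,\ldots,p_n) \in (0,1)^n$ with $p_1 + \cdots + p_n \leq 1$ and every integer $k \geq 0$, $$\Pr\{T_{2,n}(p) > k\} \geq \Pr\{T_{2,n}(v) > k\} \geq \Pr\{T_{2,n}(u) > k\},$$ where $p_0 = 1 - (p_1 + \cdots + p_n)$, $v=(v_1,\ldots,v_n)$ with $v_i = (1-p_0)/n$, and $u=(1/n,\ldots,1/n)$.
   Context: For a vector $q=(q_1,\ldots,q_n)$ of nonnegative reals with $q_1+\cdots+q_n\le 1$, let $q_0 = 1-(q_1+\cdots+q_n)$; coupons are drawn independently, one at each time $1,2,\ldots$, from $\{0,1,\ldots,n\}$, coupon $i$ with probability $q_i$, and coupon $0$ never belongs to the collection. $T_{2,n}(q)$ is the number of draws needed until 2 distinct coupons among $\{1,\ldots,n\}$ have first been drawn. Convention: $0^0=1$. *)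

(* Defs.v *)
From HB Require Import structures.
From mathcomp Require Import all_boot all_order all_algebra.
Set Implicit Arguments. Unset Strict Implicit. Unset Printing Implicit Defensive.
Import Order.TTheory GRing.Theory Num.Theory.
Local Open Scope ring_scope.

(* Coupon 0 of 'I_n.+1 is the "null" coupon; coupon (lift ord0 j) is coupon j+1. *)
Definition qext (R : realFieldType) (n : nat) (q : 'I_n -> R) (i : 'I_n.+1) : R :=
  match unlift ord0 i with
  | None => 1 - \sum_(j < n) q j
  | Some j => q j
  end.

Definition ndistinct (n k : nat) (w : {ffun 'I_k -> 'I_n.+1}) : nat :=
  #|[set w t | t : 'I_k & w t != ord0]|.

(* Pr{ T_{2,n}(q) > k } : probability that after the first k i.i.d. draws
   fewer than 2 distinct coupons of {1,..,n} have been drawn. *)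
Definition PrT2gt (R : realFieldType) (n : nat) (q : 'I_n -> R) (k : nat) : R :=
  \sum_(w : {ffun 'I_k -> 'I_n.+1} | (ndistinct w < 2)%N)
     \prod_(t < k) qext q (w t).

(* Main.v *)
Require Import Defs.
From HB Require Import structures.
From mathcomp Require Import all_boot all_order all_algebra.
From mathcomp Require Import ring lra.
Import Order.TTheory GRing.Theory Num.Theory.
Local Open Scope ring_scope.

Section Comb.
Variables (R : realFieldType) (n k : nat) (q : 'I_n -> R).

Lemma indic (w : {ffun 'I_k -> 'I_n.+1}) :
  ((ndistinct w < 2)%N%:R : R) =
  \sum_(i < n) ([forall t, (w t == ord0) || (w t == lift ord0 i)])%:R
   - (n%:R - 1) * ([forall t, w t == ord0])%:R.
Proof.
case: (boolP [forall t, w t == ord0]) => [/forallP H0|].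
  have -> : ndistinct w = 0%N.
    rewrite /ndistinct; apply/eqP; rewrite cards_eq0; apply/eqP/setP => x.
    rewrite in_set0; apply/imsetP => -[t]; by rewrite inE H0.
  rewrite (eq_bigr (fun _ => 1)); last first.
    by move=> i _; rewrite (_ : [forall _, _] = true) //; apply/forallP => t; rewrite H0.
  rewrite sumr_const card_ord mulr1.
  by rewrite opprB addrC subrK.
rewrite negb_forall => /existsP [t0 Ht0].
have Ht0' := Ht0; rewrite eq_sym in Ht0'.
case: (unlift_some Ht0') => [i0 Hi0 _].
rewrite mulr0 subr0 (bigD1 i0) //= big1 ?addr0; last first.
  move=> i Hi; rewrite (_ : [forall _, _] = false) //; apply/negbTE.
  rewrite negb_forall; apply/existsP; exists t0.
  rewrite Hi0 eq_sym (negbTE (neq_lift _ _)) /= (inj_eq lift_inj) eq_sym; exact: Hi.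
suff -> : (ndistinct w < 2)%N = [forall t, (w t == ord0) || (w t == lift ord0 i0)] by [].
rewrite /ndistinct.
apply/idP/forallP.
  move=> /card_le1_eqP H t.
  case: eqP => //= /eqP Ht; rewrite -Hi0; apply/eqP/H; apply/imsetP.
    by exists t0; rewrite ?inE.
  by exists t; rewrite ?inE.
move=> H; apply/card_le1_eqP => x y /imsetP [t1 Ht1 ->] /imsetP [t2 Ht2 ->].
rewrite !inE in Ht1 Ht2.
by move: (H t1) (H t2); rewrite (negbTE Ht1) (negbTE Ht2) /= => /eqP -> /eqP ->.
Qed.

Lemma sum_on (A : pred 'I_n.+1) :
  \sum_(w : {ffun 'I_k -> 'I_n.+1}) ([forall t, A (w t)])%:R * \prod_(t < k) qext q (w t)
  = (\sum_(j | A j) qext q j) ^+ k.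
Proof.
rewrite -[in RHS](card_ord k) -prodr_const bigA_distr_big.
rewrite [RHS]big_mkcond; apply: eq_bigr => f _.
rewrite (_ : (f \in ffun_on A) = [forall t, A (f t)]); last by apply/ffun_onP/forallP.
by case: [forall _, _]; rewrite ?mul1r ?mul0r.
Qed.

Lemma qext0 : qext q ord0 = 1 - \sum_(j < n) q j.
Proof. by rewrite /qext unlift_none. Qed.

Lemma qextS i : qext q (lift ord0 i) = q i.
Proof. by rewrite /qext liftK. Qed.

Lemma formula : PrT2gt q k =
  \sum_(i < n) (qext q ord0 + q i) ^+ k - (n%:R - 1) * (qext q ord0) ^+ k.
Proof.
rewrite /PrT2gt big_mkcond /=.
rewrite (eq_bigr (fun w => ((ndistinct w < 2)%N%:R : R) * \prod_(t < k) qext q (w t))); last first.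
  by move=> w _; case: (_ < _)%N; rewrite ?mul1r ?mul0r.
under eq_bigr do rewrite indic mulrBl -mulrA mulr_suml.
rewrite sumrB -mulr_sumr exchange_big /=.
rewrite (sum_on (fun j => j == ord0)) big_pred1_eq; congr (_ - _).
apply: eq_bigr => i _; rewrite (sum_on (fun j => (j == ord0) || (j == lift ord0 i))).
rewrite (bigD1 ord0) //= (big_pred1 (lift ord0 i)) ?qextS //.
move=> j /=; case: (eqVneq j ord0) => [->|] /=; first by apply/esym/negbTE; exact: neq_lift.
by rewrite andbT.
Qed.
End Comb.

Lemma powle (R : realFieldType) (x y : R) j : 0 <= x -> x <= y -> x ^+ j <= y ^+ j.
Proof. move=> hx hxy; apply: lerXn2r; rewrite ?nnegrE //; exact: le_trans hxy. Qed.

Lemma tangent (R : realFieldType) (x m : R) k : 0 <= x -> 0 <= m ->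
  m ^+ k.+1 + k.+1%:R * m ^+ k * (x - m) <= x ^+ k.+1.
Proof.
move=> hx hm; elim: k => [|k IH].
  by rewrite expr0 expr1 mulr1 mul1r addrC subrK.
have hmk : 0 <= m ^+ k by apply: exprn_ge0.
have h1 : x * (m ^+ k.+1 + k.+1%:R * m ^+ k * (x - m)) <= x ^+ k.+2.
  by rewrite [in X in _ <= X]exprS; apply: ler_wpM2l.
apply: le_trans h1.
rewrite -subr_ge0.
set M := m ^+ k.
have -> : x * (m ^+ k.+1 + k.+1%:R * M * (x - m)) -
    (m ^+ k.+2 + k.+2%:R * m ^+ k.+1 * (x - m)) = k.+1%:R * M * ((x - m) * (x - m)).
  rewrite !exprS -/M -[k.+2]addn1 -[k.+1]addn1 !natrD; ring.
apply: mulr_ge0; [apply: mulr_ge0 =>//|]; by rewrite -expr2 sqr_ge0.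
Qed.

Theorem theorem5 (R : realFieldType) (n : nat) (hn : (2 <= n)%N)
  (p : 'I_n -> R) (hp : forall i, 0 < p i < 1)
  (hsum : \sum_(i < n) p i <= 1) (k : nat) :
  let p0 := 1 - \sum_(i < n) p i in
  let v : 'I_n -> R := fun _ => (1 - p0) / n%:R in
  let u : 'I_n -> R := fun _ => 1 / n%:R in
  PrT2gt u k <= PrT2gt v k <= PrT2gt p k.
Proof.
cbv zeta.
set S := \sum_(i < n) p i.
set p0 := 1 - S.
set v := (fun _ : 'I_n => (1 - p0) / n%:R).
set u := (fun _ : 'I_n => 1 / n%:R).
set N : R := n%:R.
have hN : 2 <= N by rewrite /N (ler_nat R 2 n).
have hN0 : N != 0 by apply/negP => /eqP h; rewrite h in hN; lra.
have hS0 : 0 <= S by apply: sumr_ge0 => i _; case/andP: (hp i) => /ltW.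
have hp0 : 0 <= p0 by rewrite /p0 subr_ge0.
have h1p : 1 - p0 = S by rewrite /p0 opprB addrC subrK.
have qp0 : qext p ord0 = p0 by rewrite qext0.
have qv0 : qext v ord0 = p0.
  rewrite qext0 sumr_const card_ord -mulr_natr -/N /p0; field; exact: hN0.
have qu0 : qext u ord0 = 0.
  rewrite qext0 sumr_const card_ord -mulr_natr -/N; field; exact: hN0.
rewrite !formula qv0 qu0 qp0 -/N.
rewrite /u /v !sumr_const card_ord -(mulr_natl (_ ^+ k)) -(mulr_natl (_ ^+ k)) -/N.
set y := p0 + (1 - p0) / N.
set a := 1 / N.
have ha : 0 <= a by rewrite /a divr_ge0 //; lra.
have hNy : N * y = (N - 1) * p0 + 1.
  by rewrite /y; field.
have hNa : N * a = 1 by rewrite /a; field.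
have hy0 : p0 <= y by rewrite /y lerDl divr_ge0 // ?h1p //; lra.
have hya : a <= y.
  rewrite -subr_ge0 -(pmulr_rge0 _ (_ : 0 < N)); last by lra.
  rewrite mulrBr hNy hNa addrK; apply: mulr_ge0 => //; lra.
apply/andP; split.
  case: k => [|j]; first by rewrite !expr0.
  rewrite add0r expr0n /= mulr0 subr0.
  have hY : p0 ^+ j <= y ^+ j by apply: powle.
  have hA : a ^+ j <= y ^+ j by apply: powle.
  have hP : 0 <= p0 ^+ j by apply: exprn_ge0.
  set Y := y ^+ j in hY hA *; set P := p0 ^+ j in hY hP *; set A := a ^+ j in hA *.
  rewrite !exprS.
  have -> : N * (a * A) = A by rewrite mulrA hNa mul1r.
  have -> : N * (y * Y) = ((N - 1) * p0 + 1) * Y by rewrite mulrA hNy.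
  have h1 : 0 <= (N - 1) * p0 * (Y - P).
    by rewrite !mulr_ge0 //; lra.
  rewrite -/P -subr_ge0.
  have -> : ((N - 1) * p0 + 1) * Y - (N - 1) * (p0 * P) - A = (Y - A) + (N - 1) * p0 * (Y - P) by ring.
  by rewrite addr_ge0 // subr_ge0.
rewrite lerD2r.
case: k => [|j].
  by rewrite !expr0 sumr_const card_ord mulr1 /N.
have hyy : 0 <= y by lra.
have Ht : \sum_(i < n) (y ^+ j.+1 + j.+1%:R * y ^+ j * (p0 + p i - y)) <= \sum_(i < n) (p0 + p i) ^+ j.+1.
  apply: ler_sum => i _; apply: tangent => //; case/andP: (hp i) => /ltW h _; lra.
apply: le_trans Ht.
rewrite big_split /= -mulr_sumr sumrB !sumr_const card_ord big_split /= sumr_const card_ord.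
rewrite -/S.
have E : p0 *+ n + S - y *+ n = 0.
  have -> : p0 *+ n + S - y *+ n = N * p0 + S - N * y by rewrite /N !mulr_natl.
  by rewrite hNy /p0; ring.
by rewrite E mulr0 addr0 /N mulr_natl.
Qed.
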